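(* Let $(X,\tau)$ be a principal topological space, i.e. arbitrary intersections of open sets are open. The following are equivalent: (i) $(X,\tau)$ is pre-Hausdorff; (ii) $(X,\tau)$ is regular; (iii) $(X,\tau)$ has dimension $0$, i.e. has a basis consisting of clopen sets; (iv) the operator $\neg:\tau\to\tau$ defined by $\neg U = \operatorname{int}(X\setminus U)$ satisfies $\neg\neg U = U$ for every $U\in\tau$ (equivalently, the topos of sheaves on $X$ is Boolean).
   Context: A space is pre-Hausdorff ($T_{0,2}$) if any two points $a,b$ for which some open set contains exactly one of them (a $T_0$-separation) also have disjoint open neighbourhoods. ''Regular'' means: for every closed set $A$ and point $p\notin A$ there are disjoint open sets $U\ni p$ and $V\supseteq A$; points are not required to be closed. *)

(* Defs.v *)
From HB Require Import structures.
From mathcomp Require Import all_boot all_order.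
From mathcomp Require Import all_classical all_reals all_analysis.
Set Implicit Arguments. Unset Strict Implicit. Unset Printing Implicit Defensive.
Local Open Scope classical_set_scope.

Definition principal_space (T : topologicalType) : Prop :=
  forall F : set (set T), F `<=` open -> open (\bigcap_(U in F) U).

Definition pre_hausdorff (T : topologicalType) : Prop :=
  forall a b : T,
    (exists U : set T, open U /\ ((U a /\ ~ U b) \/ (U b /\ ~ U a))) ->
    exists U V : set T, [/\ open U, open V, U a, V b & U `&` V = set0].

(* Regular (no T_1 assumption), as in the paper. *)
Definition regular_paper (T : topologicalType) : Prop :=
  forall (A : set T) (p : T), closed A -> ~ A p ->
    exists U V : set T, [/\ open U, open V, U p, A `<=` V & U `&` V = set0].

Definition is_basis (T : topologicalType) (B : set (set T)) : Prop :=
  B `<=` open /\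
  forall U : set T, open U -> exists F : set (set T), F `<=` B /\ U = \bigcup_(V in F) V.

Definition dim_zero (T : topologicalType) : Prop :=
  exists B : set (set T), is_basis B /\ B `<=` clopen.

Definition neg_open (T : topologicalType) (U : set T) : set T := (~` U)°.

(* Main.v *)
Require Import Defs.
From mathcomp Require Import all_boot all_order.
From mathcomp Require Import all_classical all_reals all_analysis.
Local Open Scope classical_set_scope.
Set Implicit Arguments.

Definition Ux (T : topologicalType) (x : T) : set T :=
  \bigcap_(U in [set U | open U /\ U x]) U.

Arguments Ux {T}.

Lemma Ux_open (T : topologicalType) (hP : principal_space T) (x : T) : open (Ux x).
Proof. by apply: hP => U []. Qed.

Lemma Ux_self (T : topologicalType) (x : T) : Ux x x.
Proof. by move=> U []. Qed.

Arguments Ux_self {T}.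

Lemma Ux_sub (T : topologicalType) (x : T) (U : set T) : open U -> U x -> Ux x `<=` U.
Proof. by move=> oU Ux' y; apply. Qed.

Arguments Ux_sub {T x U}.

Lemma Ux_trans (T : topologicalType) (hP : principal_space T) (x y : T) :
  Ux x y -> Ux y `<=` Ux x.
Proof. by move=> h; apply: Ux_sub => //; apply: Ux_open. Qed.

Lemma open_up (T : topologicalType) (hP : principal_space T) (A : set T) :
  open A <-> forall w, A w -> Ux w `<=` A.
Proof.
split; first by move=> oA w Aw; apply: Ux_sub.
move=> H.
have -> : A = \bigcup_(w in A) Ux w.
  apply/seteqP; split => z.
    by move=> Az; exists z => //; apply: Ux_self.
  by move=> [w Aw]; apply: H.
by apply: bigcup_open => w _; apply: Ux_open.
Qed.

Lemma int_Ux (T : topologicalType) (hP : principal_space T) (A : set T) (w : T) :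
  A° w <-> Ux w `<=` A.
Proof.
split.
  move=> h; apply: subset_trans (@interior_subset _ A).
  by apply: Ux_sub => //; apply: open_interior.
move=> h.
have : Ux w `<=` A° by rewrite -open_subsetE //; apply: Ux_open.
by apply; apply: Ux_self.
Qed.

Definition Sym (T : topologicalType) := forall x y : T, Ux x y -> Ux y x.

Lemma sym_closed (T : topologicalType) (hP : principal_space T) :
  Sym T -> forall U : set T, open U -> closed U.
Proof.
move=> S U oU; rewrite -openC; apply/open_up => // w nUw v Uwv Uv.
by apply: nUw; apply: (Ux_sub oU Uv w); apply: S.
Qed.

Lemma closed_sym (T : topologicalType) (hP : principal_space T) :
  (forall U : set T, open U -> closed U) -> Sym T.
Proof.
move=> C x y Uxy; have [//|nyx] := pselect (Ux y x).
have oC : open (~` Ux y) by apply: closed_openC; apply: C; apply: Ux_open.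
have := (proj1 (open_up hP _) oC) x nyx y Uxy.
by move/(_ (Ux_self y)).
Qed.

Lemma sym_dim (T : topologicalType) (hP : principal_space T) :
  Sym T <-> dim_zero T.
Proof.
split.
  move=> S; exists open; split; last by move=> U oU; split => //; apply: sym_closed.
  split => // U oU; exists [set U]; split; first by move=> V ->.
  by rewrite bigcup_set1.
move=> [B [[Bo Bb] Bc]]; apply: closed_sym => // U oU.
have [F [FB ->]] := Bb U oU.
rewrite -openC; apply/open_up => // w nUw v Uwv [V FV Vv].
have cV : closed V by have [] := Bc V (FB V FV).
have oV : open (~` V) by apply: closed_openC.
have nVw : (~` V) w by move=> Vw; apply: nUw; exists V.
by have := Ux_sub oV nVw v Uwv.
Qed.

Lemma sym_neg (T : topologicalType) (hP : principal_space T) :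
  Sym T <-> (forall U : set T, open U -> neg_open (neg_open U) = U).
Proof.
split.
  move=> S U oU; rewrite /neg_open.
  have cU := sym_closed hP S oU.
  have oC : open (~` U) by apply: closed_openC.
  by rewrite (proj1 (interior_id _) oC) setCK (proj1 (interior_id _) oU).
move=> H x y Uxy; have [//|nyx] := pselect (Ux y x).
pose O := [set w | Ux x w /\ ~ Ux w x].
have oO : open O.
  apply/open_up => // w [Uxw nwx] v Uwv; split.
    by apply: (Ux_trans hP Uxw).
  by move=> Uvx; apply: nwx; apply: (Ux_trans hP Uwv).
have Oy : O y by [].
have nOx : ~ O x by move=> [_ []]; apply: Ux_self.
have := H O oO; rewrite /neg_open => E.
exfalso; apply: nOx; rewrite -E; apply/int_Ux => // z Uxz Hz.
have := (proj1 (int_Ux hP _ _) Hz).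
have [Uzx|nzx] := pselect (Ux z x).
  by move=> h; apply: (h y) => //; apply: (Ux_trans hP Uzx).
by move=> h; apply: (h z); [apply: Ux_self|].
Qed.

Lemma UxUx (T : topologicalType) (hP : principal_space T) (S : Sym T) (a b z : T) :
  Ux a z -> Ux b z -> Ux a b.
Proof. by move=> az bz; apply: (Ux_trans hP az); apply: S. Qed.

Lemma sym_ph (T : topologicalType) (hP : principal_space T) :
  Sym T <-> pre_hausdorff T.
Proof.
split.
  move=> S a b [U [oU HU]]; exists (Ux a), (Ux b); split; try apply: Ux_open => //;
    try apply: Ux_self.
  rewrite -subset0 => z [az bz].
  case: HU => [[Ua nUb]|[Ub nUa]].
    by apply: nUb; apply: (Ux_sub oU Ua b); apply: (UxUx hP S az bz).
  by apply: nUa; apply: (Ux_sub oU Ub a); apply: (UxUx hP S bz az).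
move=> PH x y Uxy; have [//|nyx] := pselect (Ux y x).
have [U [V [oU oV Ux' Vy E]]] : exists U V : set T,
    [/\ open U, open V, U x, V y & U `&` V = set0].
  apply: PH; exists (Ux y); split; first by apply: Ux_open.
  by right; split => //; apply: Ux_self.
have Uy : U y by exact: (Ux_sub oU Ux' y Uxy).
have : (U `&` V) y by [].
by rewrite E.
Qed.

Lemma sym_reg (T : topologicalType) (hP : principal_space T) :
  Sym T <-> regular_paper T.
Proof.
split.
  move=> S A p cA nAp; exists (Ux p), (~` Ux p); split.
  - by apply: Ux_open.
  - by apply: closed_openC; apply: sym_closed => //; apply: Ux_open.
  - by apply: Ux_self.
  - move=> a Aa Upa.
    have oA : open (~` A) by apply: closed_openC.
    by have := Ux_sub oA nAp a Upa.
  - by rewrite setICr.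
move=> R x y Uxy; have [//|nyx] := pselect (Ux y x).
have cA : closed (~` Ux y) by apply: open_closedC; apply: Ux_open.
have nAy : ~ (~` Ux y) y by move=> h; apply: h; apply: Ux_self.
have [U [V [oU oV Uy AV E]]] := R _ _ cA nAy.
have Vy : V y by exact: (Ux_sub oV (AV _ nyx) y Uxy).
have : (U `&` V) y by [].
by rewrite E.
Qed.

Unset Implicit Arguments.
Theorem theorem2p1 (T : topologicalType) (hP : principal_space T) :
  (pre_hausdorff T <-> regular_paper T) /\
  (regular_paper T <-> dim_zero T) /\
  (dim_zero T <-> (forall U : set T, open U -> neg_open (neg_open U) = U)).
Proof.
have h1 := sym_ph hP; have h2 := sym_reg hP; have h3 := sym_dim hP.
have h4 := sym_neg hP.
split; [|split]; split => H.
- exact: (proj1 h2 (proj2 h1 H)).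
- exact: (proj1 h1 (proj2 h2 H)).
- exact: (proj1 h3 (proj2 h2 H)).
- exact: (proj1 h2 (proj2 h3 H)).
- exact: (proj1 h4 (proj2 h3 H)).
- exact: (proj1 h3 (proj2 h4 H)).
Qed.
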